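(* There are infinitely many coprime pairs $(r,s)$ of integers $r,s\geq2$ such that $2c_{r,s}=c_{p,q}$ for some coprime integers $p,q\geq2$; that is, infinitely many of the rational vertex algebras $(\mathcal{L}_{c_{r,s}}^{\otimes 2})^{S_2}$ have a minimal (Virasoro) central charge. Likewise, there are infinitely many coprime pairs $(r,s)$, $r,s\ge2$, such that $3c_{r,s}=c_{p,q}$ for some coprime integers $p,q\geq 2$; that is, infinitely many of the vertex algebras $(\mathcal{L}_{c_{r,s}}^{\otimes 3})^{\mathbb{Z}_3}$ have a minimal central charge.
   Context: For coprime integers $p,q\geq2$, $c_{p,q}=1-\frac{6(p-q)^2}{pq}$ (a minimal central charge). $\mathcal{L}_c$ is the simple Virasoro vertex operator algebra of central charge $c$; $(\mathcal{L}_c^{\otimes 2})^{S_2}$ and $(\mathcal{L}_c^{\otimes 3})^{\mathbb{Z}_3}$ are the fixed-point subalgebras under permutation of tensor factors (resp. cyclic permutation), with central charges $2c$ and $3c$. *)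

(* Defs.v *)
From mathcomp Require Import all_boot all_order all_algebra.
Set Implicit Arguments. Unset Strict Implicit. Unset Printing Implicit Defensive.
Import Order.TTheory GRing.Theory Num.Theory.
Local Open Scope ring_scope.

Definition cmin (p q : nat) : rat :=
  1 - 6%:R * (p%:R - q%:R) ^+ 2 / (p%:R * q%:R).

Definition is_minimal_cc (c : rat) : Prop :=
  exists p q : nat, [/\ (2 <= p)%N, (2 <= q)%N, coprime p q & c = cmin p q].

(* Main.v *)
Require Import Defs.
From mathcomp Require Import all_boot all_order all_algebra.
From mathcomp.algebra_tactics Require Import ring lra.
From mathcomp.zify Require Import zify.
Set Implicit Arguments. Unset Strict Implicit. Unset Printing Implicit Defensive.
Import Order.TTheory GRing.Theory Num.Theory.

Lemma zero_mult (Z P W : int) : (0 < P -> Z * P = W -> W < P -> - P < W -> Z = 0)%R.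
Proof.
move=> hP E h1 h2; have [hz|[hz|hz]] : (Z <= -1 \/ Z = 0 \/ 1 <= Z)%R by lia.
- have : (Z * P <= -1 * P)%R by rewrite ler_wpM2r // ltW.
  lia.
- by [].
- have : (1 * P <= Z * P)%R by rewrite ler_wpM2r // ltW.
  lia.
Qed.

Lemma dvd_le (a n : nat) : 0 < n -> a %| n -> a <= n.
Proof. by move=> h /dvdn_leq ->. Qed.

Lemma lemA_core (k r a b : nat) : (k = 2 \/ k = 3) -> 2000 <= r -> 0 < b -> b <= a -> coprime a b ->
  6 * r * (a ^ 2 + b ^ 2) + 13 * (k - 1) * a * b * r = 6 * k * a * b * (r ^ 2 + 1) -> False.
Proof.
move=> hk hr hb hba cab E.
have ha : 0 < a by lia.
have a1 : a %| 6 * r.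
  have : a %| 6 * r * b ^ 2.
    have H : a %| 6 * r * b ^ 2 + (6 * r * a ^ 2 + 13 * (k - 1) * a * b * r).
      have -> : 6 * r * b ^ 2 + (6 * r * a ^ 2 + 13 * (k - 1) * a * b * r) = a * (6 * k * b * (r ^ 2 + 1)).
        transitivity (6 * k * a * b * (r ^ 2 + 1)); [rewrite -E; ring | ring].
      exact: dvdn_mulr.
    have H2 : a %| 6 * r * a ^ 2 + 13 * (k - 1) * a * b * r.
      have -> : 6 * r * a ^ 2 + 13 * (k - 1) * a * b * r = a * (6 * r * a + 13 * (k - 1) * b * r) by ring.
      exact: dvdn_mulr.
    by rewrite dvdn_addl in H.
  by rewrite Gauss_dvdl // coprimeXr.
have a2 : a <= 6 * r by apply: dvd_le => //; lia.
have a3 : 6 * k * b * r <= 6 * a + 6 * b + 13 * (k - 1) * b.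
  have : (6 * k * b * r) * (a * r) <= (6 * a + 6 * b + 13 * (k - 1) * b) * (a * r).
    have h1 : b ^ 2 <= a * b by rewrite expnS expn1 leq_mul2r hba orbT.
    have h2 : 6 * r * b ^ 2 <= 6 * r * (a * b) by rewrite leq_mul2l h1 orbT.
    have -> : 6 * k * b * r * (a * r) = 6 * k * a * b * r ^ 2 by ring.
    have -> : (6 * a + 6 * b + 13 * (k - 1) * b) * (a * r) = 6 * r * a ^ 2 + 6 * r * (a * b) + 13 * (k - 1) * a * b * r by ring.
    have h3 : 6 * k * a * b * r ^ 2 <= 6 * k * a * b * (r ^ 2 + 1) by rewrite leq_mul2l leq_addr orbT.
    move: E h2 h3; set u := 6 * k * a * b; set v := 13 * (k - 1) * a * b * r; set w := 6 * r * (a * b); lia.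
  by rewrite leq_pmul2r //; lia.
have a4 : b <= 3.
  rewrite leqNgt; apply/negP => hb4.
  have h : 4 * r <= b * r by rewrite leq_mul2r hb4 orbT.
  have h' : 2000 * b <= b * r by rewrite mulnC leq_mul2l hr orbT.
  case: hk => hk; subst k; move: a3 h h'; rewrite ?mulnA; lia.
have a5 : 6 * k * b < r by case: hk => hk; subst k; lia.
have a6 : 6 * b ^ 2 < a.
  have : b ^ 2 <= 9 by rewrite (leq_trans (leq_mul a4 a4)) // expnS expn1.
  case: hk => hk; subst k; move: a3; rewrite ?mulnA; lia.
have b1 : 6 * k * a * b < a * r.
  by rewrite [a * r]mulnC -mulnA [a * b]mulnC mulnA ltn_pmul2r.
have b2 : 6 * r * b ^ 2 < a * r.
  have -> : 6 * r * b ^ 2 = r * (6 * b ^ 2) by ring.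
  by rewrite [a * r]mulnC ltn_pmul2l // (leq_trans _ hr).
case: hk => hk; subst k.
- set Z : int := (Posz (6 * a)) - (Posz (12 * b * r)) + (Posz (13 * b)).
  have HZ2 : (Z * (Posz (a * r)) = (Posz (12 * a * b)) - (Posz (6 * r * b ^ 2)))%R.
    rewrite /Z; move: E; lia.
  have HZ0 : Z = 0%R by apply: (zero_mult _ HZ2); lia.
  move: HZ2; rewrite HZ0 mul0r => HZ3.
  move: HZ0; rewrite /Z => HZ0.
  have e1 : (2 * a) * (6 * b) = (r * b) * (6 * b) by lia.
  have e2 : 2 * a = r * b.
    by apply/eqP; rewrite -(@eqn_pmul2r (6 * b)) ?e1 //; lia.
  lia.
- set Z : int := (Posz (6 * a)) - (Posz (18 * b * r)) + (Posz (26 * b)).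
  have HZ2 : (Z * (Posz (a * r)) = (Posz (18 * a * b)) - (Posz (6 * r * b ^ 2)))%R.
    rewrite /Z; move: E; lia.
  have HZ0 : Z = 0%R by apply: (zero_mult _ HZ2); lia.
  move: HZ2; rewrite HZ0 mul0r => HZ3.
  move: HZ0; rewrite /Z => HZ0.
  have e1 : (3 * a) * (6 * b) = (r * b) * (6 * b) by lia.
  have e2 : 3 * a = r * b.
    by apply/eqP; rewrite -(@eqn_pmul2r (6 * b)) ?e1 //; lia.
  lia.
Qed.

Lemma lemA (k r a b : nat) : (k = 2 \/ k = 3) -> 2000 <= r -> 0 < a -> 0 < b -> coprime a b ->
  6 * r * (a ^ 2 + b ^ 2) + 13 * (k - 1) * a * b * r = 6 * k * a * b * (r ^ 2 + 1) -> False.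
Proof.
move=> hk hr ha hb cab E.
case: (leqP b a) => hba; first exact: (lemA_core hk hr hb hba cab E).
apply: (lemA_core hk hr ha (ltnW hba) _ (_ : _ = _)); first by rewrite coprime_sym.
transitivity (6 * r * (a ^ 2 + b ^ 2) + 13 * (k - 1) * a * b * r); first ring.
rewrite E; ring.
Qed.

Lemma lemB_core (k a b m : nat) : (k = 2 \/ k = 3) -> 2000 <= a -> 0 < b -> b <= a -> 0 < m -> coprime a b ->
  6 * a * b * (m ^ 2 + 1) + 13 * (k - 1) * m * a * b = 6 * k * m * (a ^ 2 + b ^ 2) -> False.
Proof.
move=> hk ha hb hba hm cab E.
have ha0 : 0 < a by lia.
have c1a : a %| 6 * k * m.
  have : a %| 6 * k * m * b ^ 2.
    have H : a %| 6 * k * m * b ^ 2 + 6 * k * m * a ^ 2.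
      have -> : 6 * k * m * b ^ 2 + 6 * k * m * a ^ 2 = a * (6 * b * (m ^ 2 + 1) + 13 * (k - 1) * m * b).
        transitivity (6 * k * m * (a ^ 2 + b ^ 2)); [ring | rewrite -E; ring].
      exact: dvdn_mulr.
    have H2 : a %| 6 * k * m * a ^ 2.
      have -> : 6 * k * m * a ^ 2 = a * (6 * k * m * a) by ring.
      exact: dvdn_mulr.
    by rewrite dvdn_addl in H.
  by rewrite Gauss_dvdl // coprimeXr.
have c1b : b %| 6 * k * m.
  have : b %| 6 * k * m * a ^ 2.
    have H : b %| 6 * k * m * a ^ 2 + 6 * k * m * b ^ 2.
      have -> : 6 * k * m * a ^ 2 + 6 * k * m * b ^ 2 = b * (6 * a * (m ^ 2 + 1) + 13 * (k - 1) * m * a).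
        transitivity (6 * k * m * (a ^ 2 + b ^ 2)); [ring | rewrite -E; ring].
      exact: dvdn_mulr.
    have H2 : b %| 6 * k * m * b ^ 2.
      have -> : 6 * k * m * b ^ 2 = b * (6 * k * m * b) by ring.
      exact: dvdn_mulr.
    by rewrite dvdn_addl in H.
  by rewrite Gauss_dvdl // coprimeXr // coprime_sym.
have c1 : a * b <= 6 * k * m.
  apply: dvd_le; first by case: hk => ->; lia.
  by rewrite Gauss_dvd // c1a c1b.
have c2 : b * m <= 2 * k * a.
  have : (b * m) * (6 * a * m) <= (2 * k * a) * (6 * a * m).
    have h1 : b ^ 2 <= a ^ 2 by rewrite leq_exp2r.
    have h2 : 6 * k * m * b ^ 2 <= 6 * k * m * a ^ 2 by rewrite leq_mul2l h1 orbT.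
    have -> : b * m * (6 * a * m) = 6 * a * b * m ^ 2 by ring.
    have -> : 2 * k * a * (6 * a * m) = 6 * k * m * a ^ 2 + 6 * k * m * a ^ 2 by ring.
    have h3 : 6 * a * b * m ^ 2 <= 6 * a * b * (m ^ 2 + 1) by rewrite leq_mul2l leq_addr orbT.
    move: E h2 h3.
    set u := 6 * a * b; set v := 13 * (k - 1) * m * a * b; set w := 6 * k * m; lia.
  by rewrite leq_pmul2r //; lia.
have c3 : b <= 10.
  rewrite leqNgt; apply/negP => hb11.
  have h1 : 11 * (b * m) <= b * (b * m) by rewrite leq_mul2r hb11 orbT.
  have h2 : b * (b * m) <= b * (2 * k * a) by rewrite leq_mul2l c2 orbT.
  have h3 : b * (2 * k * a) <= 2 * k * (6 * k * m).
    have -> : b * (2 * k * a) = 2 * k * (a * b) by ring.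
    by rewrite leq_mul2l c1 orbT.
  have h4 : 11 * m <= b * m by rewrite leq_mul2r hb11 orbT.
  case: hk => hk; subst k; lia.
have c4 : 6 * b < m.
  case: hk => hk; subst k; lia.
have c5 : 6 * k * b ^ 2 < a.
  have : b ^ 2 <= 100 by rewrite (leq_trans (leq_mul c3 c3)) // expnS expn1.
  case: hk => hk; subst k; lia.
have d1 : 6 * a * b < a * m.
  by rewrite -mulnA [a * b]mulnC mulnA [a * m]mulnC ltn_pmul2r.
have d2 : 6 * k * m * b ^ 2 < a * m.
  by rewrite -mulnA [m * _]mulnC mulnA ltn_pmul2r.
case: hk => hk; subst k.
- set Z : int := (Posz (12 * a)) - (Posz (6 * b * m)) - (Posz (13 * b)).
  have HZ2 : (Z * (Posz (a * m)) = (Posz (6 * a * b)) - (Posz (12 * m * b ^ 2)))%R.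
    rewrite /Z; move: E; lia.
  have HZ0 : Z = 0%R by apply: (zero_mult _ HZ2); lia.
  move: HZ2; rewrite HZ0 mul0r => HZ3.
  move: HZ0; rewrite /Z => HZ0.
  have e1 : a * (6 * b) = (2 * m * b) * (6 * b) by lia.
  have e2 : a = 2 * m * b.
    by apply/eqP; rewrite -(@eqn_pmul2r (6 * b)) ?e1 //; lia.
  lia.
- set Z : int := (Posz (18 * a)) - (Posz (6 * b * m)) - (Posz (26 * b)).
  have HZ2 : (Z * (Posz (a * m)) = (Posz (6 * a * b)) - (Posz (18 * m * b ^ 2)))%R.
    rewrite /Z; move: E; lia.
  have HZ0 : Z = 0%R by apply: (zero_mult _ HZ2); lia.
  move: HZ2; rewrite HZ0 mul0r => HZ3.
  move: HZ0; rewrite /Z => HZ0.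
  have e1 : a * (6 * b) = (3 * m * b) * (6 * b) by lia.
  have e2 : a = 3 * m * b.
    by apply/eqP; rewrite -(@eqn_pmul2r (6 * b)) ?e1 //; lia.
  lia.
Qed.

Lemma lemB (k r s m : nat) : (k = 2 \/ k = 3) -> 2000 <= r -> 0 < s -> 0 < m -> coprime r s ->
  6 * r * s * (m ^ 2 + 1) + 13 * (k - 1) * m * r * s = 6 * k * m * (r ^ 2 + s ^ 2) -> False.
Proof.
move=> hk hr hs hm crs E.
case: (leqP s r) => hsr; first exact: (lemB_core hk hr hs hsr hm crs E).
apply: (lemB_core hk (leq_trans hr (ltnW hsr)) (_ : 0 < r) (ltnW hsr) hm _ (_ : _ = _)).
- lia.
- by rewrite coprime_sym.
- transitivity (6 * r * s * (m ^ 2 + 1) + 13 * (k - 1) * m * r * s); first ring.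
  rewrite E; ring.
Qed.

Local Open Scope ring_scope.

Definition two : rat := 2%:R.
Definition ord2 (x : rat) (e : int) := exists a b : int,
  [/\ odd `|a|%N, odd `|b|%N & x = two ^ e * a%:~R / b%:~R].
Definition int2 (x : rat) (e : int) := exists c d : int,
  odd `|d|%N /\ x = two ^ e * c%:~R / d%:~R.

Lemma two_neq0 : two != 0. Proof. by rewrite /two. Qed.
Lemma p2D (e f : int) : two ^ (e + f) = two ^ e * two ^ f.
Proof. exact: expfzDr two_neq0. Qed.
Lemma p2_neq0 (e : int) : two ^ e != 0.
Proof. exact: expfz_neq0 two_neq0. Qed.

Lemma odd_neq0 (a : int) : odd `|a|%N -> (a%:~R : rat) != 0.
Proof. by rewrite intr_eq0; apply: contraTneq => ->. Qed.

Lemma ord2_int2 x e : ord2 x e -> int2 x e.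
Proof. by case=> a [b] [_ ob ->]; exists a, b. Qed.

Lemma int2_mul x y e f : int2 x e -> int2 y f -> int2 (x * y) (e + f).
Proof.
case=> c [d] [od ->]; case=> c' [d'] [od' ->].
exists (c * c'), (d * d'); split; first by rewrite abszM oddM od od'.
have := odd_neq0 od; have := odd_neq0 od'; have := p2_neq0 e; have := p2_neq0 f.
rewrite p2D !rmorphM /= => h1 h2 h3 h4; field.
by rewrite h3 h4.
Qed.

Lemma ord2_mul x y e f : ord2 x e -> ord2 y f -> ord2 (x * y) (e + f).
Proof.
case=> a [b] [oa ob ->]; case=> a' [b'] [oa' ob' ->].
exists (a * a'), (b * b'); split; rewrite ?abszM ?oddM ?oa ?oa' ?ob ?ob' //.
have := odd_neq0 ob; have := odd_neq0 ob'.
rewrite p2D !rmorphM /= => h1 h2; field.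
by rewrite h1 h2.
Qed.

Lemma ord2_inv x e : ord2 x e -> ord2 x^-1 (- e).
Proof.
case=> a [b] [oa ob ->]; exists b, a; split => //.
have := odd_neq0 oa; have := odd_neq0 ob; have := p2_neq0 e => h0 h1 h2.
rewrite -invr_expz.
by field; rewrite h0 h1 h2.
Qed.

Lemma p2_nat (n : nat) : two ^ (n%:Z) = (2 ^+ n)%:~R.
Proof. by rewrite rmorphXn /=. Qed.

Lemma le_split (e f : int) : e <= f -> exists n : nat, f = e + n%:Z.
Proof. move=> h; exists (absz (f - e)%R); rewrite abszE ger0_norm; [ring | lia]. Qed.

Lemma lt_split (e f : int) : e < f -> exists n : nat, f = e + n.+1%:Z.
Proof. move=> h; exists (absz (f - e - 1)%R); rewrite -addn1 PoszD abszE ger0_norm; [ring | lia]. Qed.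

Lemma int2_add x y e f : int2 x e -> int2 y f -> e <= f -> int2 (x + y) e.
Proof.
case=> c [d] [od ->]; case=> c' [d'] [od' ->] /le_split [n ->].
exists (c * d' + 2 ^+ n * c' * d), (d * d'); split; first by rewrite abszM oddM od od'.
have := odd_neq0 od; have := odd_neq0 od'.
rewrite p2D p2_nat !rmorphD !rmorphM /= => h1 h2; field.
by rewrite h1 h2.
Qed.

Lemma odd_abs_add2 (a b : int) : odd (absz (a + 2 * b)) = odd (absz a).
Proof. have H: (absz (a + 2 * b)%R %% 2 = absz a %% 2)%N by lia.
by move: H; rewrite !modn2; do 2 case: odd. Qed.

Lemma ord2_add x y e f : ord2 x e -> int2 y f -> e < f -> ord2 (x + y) e.
Proof.
case=> a [b] [oa ob ->]; case=> c' [d'] [od' ->] /lt_split [n ->].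
exists (a * d' + 2 * (2 ^+ n * c' * b)), (b * d'); split.
- by rewrite odd_abs_add2 abszM oddM oa od'.
- by rewrite abszM oddM ob od'.
- have := odd_neq0 ob; have := odd_neq0 od'.
  rewrite p2D p2_nat !rmorphD !rmorphM /= => h1 h2; rewrite exprS; field.
  by rewrite h1 h2.
Qed.

Lemma int2_weaken x e f : int2 x f -> e <= f -> int2 x e.
Proof.
case=> c [d] [od ->] /le_split [n ->].
exists (2 ^+ n * c), d; split => //.
rewrite p2D p2_nat rmorphM /=; ring.
Qed.

Lemma int2_z (z : int) : int2 z%:~R 0.
Proof. by exists z, 1; split => //; rewrite expr0z mul1r divr1. Qed.

Lemma ord2_neq0 x e : ord2 x e -> x != 0.
Proof.
case=> a [b] [oa ob ->]; rewrite !mulf_neq0 ?p2_neq0 ?odd_neq0 ?invr_neq0 ?odd_neq0 //.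
Qed.

Lemma ord2_N x e : ord2 x e -> ord2 (- x) e.
Proof.
case=> a [b] [oa ob ->]; exists (- a), b; split; rewrite ?abszN //.
rewrite rmorphN /=; ring.
Qed.

Lemma int2_N x e : int2 x e -> int2 (- x) e.
Proof. case=> c [d] [od ->]; exists (- c), d; split => //; rewrite rmorphN /=; ring. Qed.

Lemma ord2_uniq_lt x e f : ord2 x e -> ord2 x f -> e < f -> False.
Proof.
case=> a [b] [oa ob ->]; case=> a' [b'] [oa' ob'] E /lt_split [n En].
move: E; rewrite En p2D p2_nat => E.
have h1 := odd_neq0 ob; have h2 := odd_neq0 ob'; have h0 := p2_neq0 e.
have E2 : (a * b')%:~R = ((2 * (2 ^+ n * a' * b))%:~R : rat).
  apply/eqP; rewrite -subr_eq0; rewrite !rmorphM /= rmorphXn /=.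
  move: E; rewrite rmorphXn /= => E.
  have -> : a%:~R * b'%:~R - 2%:~R * (2%:~R ^+ n * a'%:~R * b%:~R) = b%:~R * b'%:~R / two ^ e * (two ^ e * a%:~R / b%:~R - two ^ e * 2%:~R ^+ n.+1 * a'%:~R / b'%:~R) :> rat.
    rewrite exprS; field; by rewrite h0 h1 h2.
  by rewrite E subrr mulr0.
move/intr_inj: E2 => E2.
have := oa; have := ob'; have : odd (absz (a * b')) by rewrite abszM oddM oa ob'.
by rewrite E2 -[2 * _]add0r odd_abs_add2.
Qed.

Lemma ord2_uniq x e f : ord2 x e -> ord2 x f -> e = f.
Proof.
move=> h1 h2; case: (ltgtP e f) => // h.
- by case: (ord2_uniq_lt h1 h2 h).
- by case: (ord2_uniq_lt h2 h1 h).
Qed.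

Lemma nat_decomp (n : nat) : (0 < n)%N -> exists a m : nat, odd m /\ n = (2 ^ a * m)%N.
Proof.
elim: n {-2}n (leqnn n) => [|N IH] n hn n0; first by move: hn n0; case: n.
case: (boolP (odd n)) => on; first by exists 0%N, n; rewrite expn0 mul1n.
have n2 : n = (2 * n./2)%N by rewrite -{1}(odd_double_half n) (negbTE on) add0n mul2n.
have h1 : (n./2 <= N)%N by move: hn n0; rewrite {1 2}n2; lia.
have h2 : (0 < n./2)%N by move: n0; rewrite n2; lia.
have [a [m [om hm]]] := IH n./2 h1 h2.
exists a.+1, m; split => //; rewrite n2 hm expnS; lia.
Qed.

Lemma PZ (n : nat) : ((n%:Z)%:~R : rat) = n%:R. Proof. by []. Qed.

Lemma ord2_ex x : x != 0 -> exists e, ord2 x e.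
Proof.
move=> x0.
have hn : (0 < `|numq x|)%N by rewrite absz_gt0 numq_eq0.
have hd : (0 < `|denq x|)%N by rewrite absz_gt0 gt_eqF ?denq_gt0.
have [a [m [om hm]]] := nat_decomp hn.
have [b [m' [om' hm']]] := nat_decomp hd.
exists (a%:Z - b%:Z), ((-1) ^+ (numq x < 0)%R * m%:Z), m'%:Z; split => //.
  by rewrite abszMsign.
rewrite -{1}(divq_num_den x).
have E2 : denq x = (2 ^ b * m')%N%:Z.
  by rewrite -hm' gtz0_abs ?denq_gt0.
rewrite {1}[numq x]intEsign hm E2 p2D -invr_expz !p2_nat.
have hm0 : (m'%:~R : rat) != 0 by rewrite intr_eq0 eqz_nat; apply: contraTneq om' => ->.
have hm1 : (m'%:R : rat) != 0 by rewrite pnatr_eq0; apply: contraTneq om' => ->.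
have h2a : (2%:R ^+ b : rat) != 0 by rewrite expf_neq0.
rewrite !rmorphM /= rmorphXn /= rmorphN1 !PZ !natrX !rmorphXn /=.
field.
by rewrite hm1 h2a.
Qed.

Lemma ord2_num x (n : nat) : ord2 x n%:Z -> (2 ^ n %| `|numq x|)%N.
Proof.
case=> a [b] [oa ob E].
have hb := odd_neq0 ob.
have hd : ((denq x)%:~R : rat) != 0 by rewrite intr_eq0 gt_eqF ?denq_gt0.
have E2 : numq x * b = 2 ^+ n * a * denq x.
  apply: (@intr_inj rat); rewrite !rmorphM /= rmorphXn /=.
  move: E; rewrite -[in LHS](divq_num_den x) p2_nat rmorphXn /= => E.
  have -> : (numq x)%:~R = ((numq x)%:~R / (denq x)%:~R) * (denq x)%:~R :> rat by field.
  rewrite E; field; by rewrite hb.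
have : (2 ^ n %| `|numq x| * `|b|)%N.
  by rewrite -abszM E2 !abszM abszX /= -mulnA dvdn_mulr.
by rewrite Gauss_dvdl // coprimeXl // coprime2n.
Qed.

Lemma ord2_cast x e f : ord2 x e -> e = f -> ord2 x f. Proof. by move=> h <-. Qed.

Lemma ord2_z (z : int) (n : nat) (a : int) : odd `|a|%N -> z = 2 ^+ n * a -> ord2 z%:~R n%:Z.
Proof.
move=> oa ->; exists a, 1; split => //.
by rewrite p2_nat divr1 rmorphM.
Qed.

Lemma int2_zX (z : int) x e : ord2 x e -> int2 (z%:~R * x) e.
Proof. move=> h; have := int2_mul (int2_z z) (ord2_int2 h); by rewrite add0r. Qed.

Lemma int2_zXe (z : int) x e : int2 x e -> int2 (z%:~R * x) e.
Proof. move=> h; have := int2_mul (int2_z z) h; by rewrite add0r. Qed.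

Definition fc (A B C : rat) (X : rat) : rat := X ^+ 3 + (A * X ^+ 2 + (B * X + C)).
Definition Dnum (A B C : rat) (X : rat) : rat :=
  X ^+ 4 + ((- 2%:R * B) * X ^+ 2 + ((- 8%:R * C) * X + (B ^+ 2 - 4%:R * A * C))).
Definition Dc (A B C : rat) (X : rat) : rat := Dnum A B C X / (4%:R * fc A B C X).
Definition fp (A B : rat) (X : rat) : rat := 3%:R * X ^+ 2 + 2%:R * A * X + B.
Definition Yc (A B C : rat) (X Y : rat) : rat :=
  (fp A B X * (X - Dc A B C X) - 2%:R * fc A B C X) / (2%:R * Y).

Lemma int2_cX c x e : int2 c 0 -> ord2 x e -> int2 (c * x) e.
Proof. move=> hc h; have := int2_mul hc (ord2_int2 h); by rewrite add0r. Qed.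
Lemma int2_n (n : nat) : int2 n%:R 0.
Proof. exact: (int2_z n). Qed.
Lemma int2_Nn (n : nat) : int2 (- n%:R) 0.
Proof. exact: int2_N (int2_n n). Qed.
Lemma int2_m c d : int2 c 0 -> int2 d 0 -> int2 (c * d) 0.
Proof. move=> h1 h2; have := int2_mul h1 h2; by rewrite add0r. Qed.
Lemma int2_a c d : int2 c 0 -> int2 d 0 -> int2 (c + d) 0.
Proof. move=> h1 h2; exact: int2_add h1 h2 (lexx _). Qed.

Lemma ord2_X2 x e : ord2 x e -> ord2 (x ^+ 2) (e + e).
Proof. by move=> h; rewrite expr2; apply: ord2_mul. Qed.
Lemma ord2_X3 x e : ord2 x e -> ord2 (x ^+ 3) (e + e + e).
Proof. move=> h; rewrite exprS; apply: ord2_cast (ord2_mul h (ord2_X2 h)) _; lia. Qed.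
Lemma ord2_X4 x e : ord2 x e -> ord2 (x ^+ 4) (e + e + (e + e)).
Proof. move=> h; have -> : x ^+ 4 = x ^+ 2 * x ^+ 2 by rewrite -exprD.
exact: ord2_mul (ord2_X2 h) (ord2_X2 h). Qed.

Lemma fc_ord A B C x e : int2 A 0 -> int2 B 0 -> int2 C 0 ->
  ord2 x e -> e <= -1 -> ord2 (fc A B C x) (e + e + e).
Proof.
move=> hA hB hC h he.
have H1 : int2 (B * x + C) (e + e).
  apply: (@int2_add _ _ (e + e) (e + e)); [apply: int2_weaken (int2_cX hB h) _ | apply: int2_weaken hC _ | ]; lia.
have H : int2 (A * x ^+ 2 + (B * x + C)) (e + e).
  apply: int2_add (int2_cX hA (ord2_X2 h)) H1 _; lia.
apply: ord2_add (ord2_X3 h) H _; lia.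
Qed.

Lemma Dnum_ord A B C x e : int2 A 0 -> int2 B 0 -> int2 C 0 ->
  ord2 x e -> e <= -1 -> ord2 (Dnum A B C x) (e + e + (e + e)).
Proof.
move=> hA hB hC h he.
have hB2 : int2 (- 2%:R * B) 0 by apply: int2_m; [exact: int2_Nn | exact: hB].
have hC8 : int2 (- 8%:R * C) 0 by apply: int2_m; [exact: int2_Nn | exact: hC].
have hK : int2 (B ^+ 2 - 4%:R * A * C) 0.
  apply: int2_a; first by rewrite expr2; apply: int2_m.
  by rewrite -!mulNr; apply: int2_m => //; apply: int2_m => //; exact: int2_Nn.
have H1 : int2 ((- 8%:R * C) * x + (B ^+ 2 - 4%:R * A * C)) (e + e).
  apply: (@int2_add _ _ (e + e) (e + e)); [apply: int2_weaken (int2_cX hC8 h) _ | apply: int2_weaken hK _ | ]; lia.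
have H : int2 ((- 2%:R * B) * x ^+ 2 + ((- 8%:R * C) * x + (B ^+ 2 - 4%:R * A * C))) (e + e).
  apply: int2_add (int2_cX hB2 (ord2_X2 h)) H1 _; lia.
apply: ord2_add (ord2_X4 h) H _; lia.
Qed.

Lemma Dc_ord A B C x e : int2 A 0 -> int2 B 0 -> int2 C 0 ->
  ord2 x e -> e <= -1 -> ord2 (Dc A B C x) (e - 2).
Proof.
move=> hA hB hC h he; rewrite /Dc; apply: ord2_cast.
  apply: ord2_mul (Dnum_ord hA hB hC h he) (ord2_inv (ord2_mul _ (fc_ord hA hB hC h he))).
  exact: (@ord2_z 4 2 1).
lia.
Qed.

Lemma pos_numden (x : rat) : 0 < x ->
  [/\ x = (`|numq x|%N)%:R / (`|denq x|%N)%:R, (0 < `|numq x|)%N, (0 < `|denq x|)%N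
    & coprime `|numq x| `|denq x|].
Proof.
move=> hx; split; last exact: coprime_num_den.
- rewrite -{1}(divq_num_den x); congr (_ / _).
  + by rewrite -[in LHS](gtz0_abs (_ : 0 < numq x)) ?numq_gt0.
  + by rewrite -[in LHS](gtz0_abs (denq_gt0 x)).
- by rewrite absz_gt0 numq_eq0 gt_eqF.
- by rewrite absz_gt0 gt_eqF ?denq_gt0.
Qed.

Lemma sum_inv (a b : nat) : (0 < a)%N -> (0 < b)%N ->
  (a%:R / b%:R) + (a%:R / b%:R)^-1 = ((a ^ 2 + b ^ 2)%N)%:R / ((a * b)%N)%:R :> rat.
Proof.
move=> ha hb; have ha' : (a%:R : rat) != 0 by rewrite pnatr_eq0 -lt0n.
have hb' : (b%:R : rat) != 0 by rewrite pnatr_eq0 -lt0n.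
rewrite !(natrD, natrM, natrX); field; by rewrite ha' hb'.
Qed.

Lemma cmin_E (a b : nat) : (0 < a)%N -> (0 < b)%N ->
  cmin a b = 13%:R - 6%:R * ((a%:R / b%:R) + (a%:R / b%:R)^-1).
Proof.
move=> ha hb; have ha' : (a%:R : rat) != 0 by rewrite pnatr_eq0 -lt0n.
have hb' : (b%:R : rat) != 0 by rewrite pnatr_eq0 -lt0n.
rewrite /cmin; field; by rewrite ha' hb'.
Qed.

Lemma finish (k : nat) (t y : rat) (n : nat) : (k = 2 \/ k = 3)%N -> 0 < t -> 0 < y ->
  y + y^-1 = k%:R * (t + t^-1) - 13%:R * (k%:R - 1) / 6%:R ->
  ord2 t n%:Z -> (11 <= n)%N ->
  exists r s : nat, [/\ (2 <= r)%N, (2 <= s)%N, coprime r s, is_minimal_cc (k%:R * cmin r s)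
     & t = r%:R / s%:R].
Proof.
move=> hk ht hy E ho hn.
have [Et hr hs crs] := pos_numden ht.
have [Ey hp hq cpq] := pos_numden hy.
set r := `|numq t|%N in Et hr hs crs.
set s := `|denq t|%N in Et hr hs crs.
set p := `|numq y|%N in Ey hp hq cpq.
set q := `|denq y|%N in Ey hp hq cpq.
have EN : (6 * r * s * (p ^ 2 + q ^ 2) + 13 * (k - 1) * p * q * r * s = 6 * k * p * q * (r ^ 2 + s ^ 2))%N.
  apply/eqP; rewrite -(eqr_nat rat); apply/eqP.
  move: E; rewrite Et Ey !sum_inv // => E.
  have hk1 : (1 <= k)%N by case: hk => ->.
  rewrite !(natrD, natrM, natrX, natrB _ hk1).
  rewrite !(natrD, natrM, natrX) in E.
  have hp' : (p%:R : rat) != 0 by rewrite pnatr_eq0 -lt0n.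
  have hq' : (q%:R : rat) != 0 by rewrite pnatr_eq0 -lt0n.
  have hr' : (r%:R : rat) != 0 by rewrite pnatr_eq0 -lt0n.
  have hs' : (s%:R : rat) != 0 by rewrite pnatr_eq0 -lt0n.
  apply/eqP; rewrite -subr_eq0; apply/eqP.
  move/eqP: E; rewrite -subr_eq0 => /eqP E.
  rewrite -[RHS](mulr0 (6%:R * p%:R * q%:R * r%:R * s%:R)) -E.
  field; by rewrite hp' hq' hr' hs'.
have hr2 : (2000 <= r)%N.
  have h1 : (2 ^ n <= r)%N by apply: dvdn_leq => //; exact: ord2_num ho.
  have h2 : (2 ^ 11 <= 2 ^ n)%N by rewrite leq_exp2l.
  by apply: leq_trans h1; apply: leq_trans h2.
have hk' : k = 2%N \/ k = 3%N by [].
have hs2 : (2 <= s)%N.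
  case: (ltngtP s 1) => // [|hs1]; first by move: hs; case: (s).
  exfalso; apply: (lemA hk' hr2 hp hq cpq).
  by move: EN; rewrite hs1; lia.
have hp2 : (2 <= p)%N.
  case: (ltngtP p 1) => // [|hp1]; first by move: hp; case: (p).
  exfalso; apply: (lemB hk' hr2 hs hq crs).
  by move: EN; rewrite hp1; lia.
have hq2 : (2 <= q)%N.
  case: (ltngtP q 1) => // [|hq1]; first by move: hq; case: (q).
  exfalso; apply: (lemB hk' hr2 hs hp crs).
  by move: EN; rewrite hq1; lia.
exists r; exists s; split => //; first by apply: leq_trans hr2.
rewrite /is_minimal_cc; exists p; exists q; split => //.
rewrite !cmin_E // -Et -Ey E.
field; exact: lt0r_neq0.
Qed.

Definition Pk (k : nat) (mu nu lam al kap : int) (X W : rat) : rat :=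
  let N := mu%:~R * (X + nu%:~R) in let Dn := W + lam%:~R * (X + al%:~R) in
  let Z := X + al%:~R in
  6%:R * (N ^+ 2 * Z ^+ 2 + kap%:~R ^+ 2 * Dn ^+ 2)
  - 6%:R * k%:R * kap%:~R * (N ^+ 2 * Z + Dn ^+ 2 * Z)
  + 13%:R * (k%:R - 1) * kap%:~R * Dn * N * Z.
Definition Gk (k : nat) (al kap : int) (X : rat) : rat :=
  6%:R * kap%:~R ^+ 2 - 6%:R * k%:R * kap%:~R * (X + al%:~R).

Lemma eq_from_id (k : nat) (A B C : rat) (mu nu lam al kap : int) (X W : rat) :
  (forall X W : rat, Pk k mu nu lam al kap X W = (W ^+ 2 - fc A B C X) * Gk k al kap X) ->
  W ^+ 2 = fc A B C X ->
  mu%:~R * (X + nu%:~R) != 0 -> W + lam%:~R * (X + al%:~R) != 0 -> X + al%:~R != 0 -> (kap%:~R : rat) != 0 ->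
  let t := mu%:~R * (X + nu%:~R) / (W + lam%:~R * (X + al%:~R)) in
  let y := t * (X + al%:~R) / kap%:~R in
  y + y^-1 = k%:R * (t + t^-1) - 13%:R * (k%:R - 1) / 6%:R.
Proof.
move=> Hid hW hN hD hZ hk t y.
have P0 : Pk k mu nu lam al kap X W = 0 by rewrite Hid hW subrr mul0r.
apply/eqP; rewrite -subr_eq0; apply/eqP.
rewrite -(mul0r ((6%:R * kap%:~R * (W + lam%:~R * (X + al%:~R)) * (mu%:~R * (X + nu%:~R)) * (X + al%:~R))^-1)).
rewrite -P0 /Pk /y /t.
move: hN hD hZ hk.
set N := mu%:~R * (X + nu%:~R); set D := W + lam%:~R * (X + al%:~R); set Z := X + al%:~R.
move=> hN hD hZ hk; field.
by rewrite hN hD hZ hk.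
Qed.

Lemma quot_neg (a b : rat) : a / b < 0 -> a * b < 0.
Proof.
move=> h; have hb : b != 0 by apply: contraTneq h => ->; rewrite invr0 mulr0 ltxx.
have -> : a * b = (a / b) * (b * b) by field.
by rewrite pmulr_llt0 // -expr2 exprn_even_gt0 //=.
Qed.

Lemma Y_ord A B C X Y (j : nat) : int2 A 0 -> int2 B 0 -> int2 C 0 -> (1 <= j)%N ->
  Y ^+ 2 = fc A B C X -> ord2 X (- (2 * j%:Z)) -> ord2 Y (- (3 * j%:Z)).
Proof.
move=> hA hB hC hj hY hX.
have hf := fc_ord hA hB hC hX (_ : - (2 * j%:Z) <= -1).
have hf' := hf ltac:(lia).
have Y0 : Y != 0.
  by apply: contraTneq (ord2_neq0 hf') => Y0; rewrite -hY Y0 expr0n.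
have [g hg] := ord2_ex Y0.
have := ord2_mul hg hg; rewrite -expr2 hY => hg2.
have E := ord2_uniq hg2 hf'.
by apply: ord2_cast hg _; lia.
Qed.

Lemma t_ord (mu nu lam al : int) (m0 j : nat) X W : (1 <= j)%N -> ord2 mu%:~R m0%:Z ->
  ord2 X (- (2 * j%:Z)) -> ord2 W (- (3 * j%:Z)) ->
  ord2 (mu%:~R * (X + nu%:~R) / (W + lam%:~R * (X + al%:~R))) (m0 + j)%N%:Z.
Proof.
move=> hj hmu hX hW.
have h1 : ord2 (X + nu%:~R) (- (2 * j%:Z)) by apply: ord2_add hX (int2_z nu) _; lia.
have h2 : ord2 (X + al%:~R) (- (2 * j%:Z)) by apply: ord2_add hX (int2_z al) _; lia.
have h3 : ord2 (W + lam%:~R * (X + al%:~R)) (- (3 * j%:Z)).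
  by apply: ord2_add hW (int2_zX lam h2) _; lia.
apply: ord2_cast (ord2_mul (ord2_mul hmu h1) (ord2_inv h3)) _.
rewrite PoszD; lia.
Qed.

Lemma ypos (k : nat) (t y : rat) : (k = 2 \/ k = 3)%N -> 0 < t ->
  y + y^-1 = k%:R * (t + t^-1) - 13%:R * (k%:R - 1) / 6%:R -> 0 < y.
Proof.
move=> hk ht E.
have hu : 0 < t^-1 by rewrite invr_gt0.
have tu : t * t^-1 = 1 by rewrite mulfV // gt_eqF.
have h2 : 2%:R <= t + t^-1.
  have := mulr_ge0 (sqr_ge0 (t - 1)) (ltW hu).
  have -> : (t - 1) ^+ 2 * t^-1 = t * (t * t^-1) - 2%:R * (t * t^-1) + t^-1 by ring.
  rewrite tu; lra.
have hs : 0 < y + y^-1.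
  rewrite E; case: hk => ->; lra.
rewrite ltNge; apply/negP => hy.
have : y^-1 <= 0 by rewrite invr_le0.
lra.
Qed.

Lemma sign_contra (A B C : rat) (mu nu lam al : int) (X Y : rat) :
  (forall X : rat, (X + nu%:~R) * (X + al%:~R) < 0 -> (lam%:~R * (X + al%:~R)) ^+ 2 - fc A B C X < 0) ->
  0 < mu -> 0 < lam -> Y ^+ 2 = fc A B C X ->
  mu%:~R * (X + nu%:~R) / (Y + lam%:~R * (X + al%:~R)) < 0 ->
  mu%:~R * (X + nu%:~R) / (- Y + lam%:~R * (X + al%:~R)) < 0 -> False.
Proof.
move=> HS hmu hlam hY h1 h2.
move/quot_neg: h1; move/quot_neg: h2.
set N := mu%:~R * (X + nu%:~R); set L := lam%:~R * (X + al%:~R) => h2 h1.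
have h3 : 0 < N ^+ 2 * (L ^+ 2 - Y ^+ 2).
  have -> : N ^+ 2 * (L ^+ 2 - Y ^+ 2) = (N * (Y + L)) * (N * (- Y + L)) by ring.
  by rewrite nmulr_rgt0.
have h4 : 0 < L ^+ 2 - Y ^+ 2.
  rewrite ltNge; apply/negP => h5.
  have : N ^+ 2 * (L ^+ 2 - Y ^+ 2) <= 0 by rewrite mulr_ge0_le0 // sqr_ge0.
  lra.
have h5 : N * L < 0.
  have -> : N * L = (N * (Y + L) + N * (- Y + L)) / 2%:R by field.
  rewrite pmulr_llt0 ?invr_gt0 //; lra.
have hml : (0 : rat) < mu%:~R * lam%:~R by rewrite mulr_gt0 // ltr0z.
have h6 : (X + nu%:~R) * (X + al%:~R) < 0.
  have : (mu%:~R * lam%:~R) * ((X + nu%:~R) * (X + al%:~R)) < 0.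
    by move: h5; rewrite /N /L; have -> : (mu%:~R * (X + nu%:~R) * (lam%:~R * (X + al%:~R))) = (mu%:~R * lam%:~R) * ((X + nu%:~R) * (X + al%:~R)) :> rat by ring.
  by rewrite pmulr_rlt0.
have := HS X h6; rewrite -hY -/L; lra.
Qed.

Lemma point_good (k : nat) (A B C : rat) (mu nu lam al kap : int) (m0 : nat) X Y (j : nat) :
  (k = 2 \/ k = 3)%N -> int2 A 0 -> int2 B 0 -> int2 C 0 ->
  (forall X W : rat, Pk k mu nu lam al kap X W = (W ^+ 2 - fc A B C X) * Gk k al kap X) ->
  (forall X : rat, (X + nu%:~R) * (X + al%:~R) < 0 -> (lam%:~R * (X + al%:~R)) ^+ 2 - fc A B C X < 0) ->
  0 < mu -> 0 < lam -> 0 < kap -> ord2 mu%:~R m0%:Z ->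
  (11 <= j)%N -> Y ^+ 2 = fc A B C X -> ord2 X (- (2 * j%:Z)) ->
  exists r s : nat, [/\ (2 <= r)%N, (2 <= s)%N, coprime r s, is_minimal_cc (k%:R * cmin r s)
     & ord2 (r%:R / s%:R) (m0 + j)%N%:Z].
Proof.
move=> hk hA hB hC Hid HS hmu hlam hkap Hmu hj hY hX.
have hj1 : (1 <= j)%N by apply: leq_trans hj.
have hYo := Y_ord hA hB hC hj1 hY hX.
have key : forall W, W ^+ 2 = fc A B C X -> ord2 W (- (3 * j%:Z)) ->
    0 < mu%:~R * (X + nu%:~R) / (W + lam%:~R * (X + al%:~R)) ->
    exists r s : nat, [/\ (2 <= r)%N, (2 <= s)%N, coprime r s, is_minimal_cc (k%:R * cmin r s)
     & ord2 (r%:R / s%:R) (m0 + j)%N%:Z].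
  move=> W hW hWo htp.
  have ho := t_ord nu lam al hj1 Hmu hX hWo.
  have h1 : ord2 (X + nu%:~R) (- (2 * j%:Z)) by apply: ord2_add hX (int2_z nu) _; lia.
  have h2 : ord2 (X + al%:~R) (- (2 * j%:Z)) by apply: ord2_add hX (int2_z al) _; lia.
  have h3 : ord2 (W + lam%:~R * (X + al%:~R)) (- (3 * j%:Z)).
    by apply: ord2_add hWo (int2_zX lam h2) _; lia.
  have hN : mu%:~R * (X + nu%:~R) != 0 by rewrite mulf_neq0 ?(ord2_neq0 h1) // intr_eq0 gt_eqF.
  have hkap0 : (kap%:~R : rat) != 0 by rewrite intr_eq0 gt_eqF.
  have E := eq_from_id Hid hW hN (ord2_neq0 h3) (ord2_neq0 h2) hkap0.
  move: E htp ho.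
  set t := mu%:~R * (X + nu%:~R) / (W + lam%:~R * (X + al%:~R)) => E htp ho.
  have hy := ypos hk htp E.
  have [r [s [hr hs crs hmin ht]]] := finish hk htp hy E ho (leq_trans hj (leq_addl _ _)).
  by exists r, s; split => //; rewrite -ht.
case: (boolP (0 < mu%:~R * (X + nu%:~R) / (Y + lam%:~R * (X + al%:~R)))) => htp.
  exact: key hY hYo htp.
have hY' : (- Y) ^+ 2 = fc A B C X by rewrite sqrrN.
apply: (key (- Y) hY' (ord2_N hYo)).
have hY0 := t_ord nu lam al hj1 Hmu hX hYo.
have hY1 := t_ord nu lam al hj1 Hmu hX (ord2_N hYo).
rewrite ltNge; apply/negP => htm.
apply: (sign_contra HS hmu hlam hY).
  by rewrite lt_neqAle (ord2_neq0 hY0) leNgt htp.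
by rewrite lt_neqAle (ord2_neq0 hY1) htm.
Qed.

Lemma dbl_id A B C X : fc A B C X != 0 ->
  fc A B C (Dc A B C X) * (4%:R * fc A B C X) = (fp A B X * (X - Dc A B C X) - 2%:R * fc A B C X) ^+ 2.
Proof. move=> h; rewrite /Dc /fp /Dnum; move: h; rewrite /fc => h. field. by rewrite h. Qed.

Fixpoint pts (A B C : rat) (P0 : rat * rat) (n : nat) : rat * rat :=
  match n with
  | 0 => P0
  | n'.+1 => let P := pts A B C P0 n' in (Dc A B C P.1, Yc A B C P.1 P.2)
  end.

Lemma pts_inv A B C X0 Y0 (j0 : nat) : int2 A 0 -> int2 B 0 -> int2 C 0 -> (1 <= j0)%N ->
  Y0 ^+ 2 = fc A B C X0 -> ord2 X0 (- (2 * j0%:Z)) ->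
  forall n, (pts A B C (X0, Y0) n).2 ^+ 2 = fc A B C (pts A B C (X0, Y0) n).1 /\
            ord2 (pts A B C (X0, Y0) n).1 (- (2 * (j0 + n)%N%:Z)).
Proof.
move=> hA hB hC hj hY hX; elim => [|n [IH1 IH2]] /=.
  by rewrite addn0.
set X := (pts A B C (X0, Y0) n).1 in IH1 IH2 *; set Y := (pts A B C (X0, Y0) n).2 in IH1 *.
have hf := fc_ord hA hB hC IH2 (_ : - (2 * (j0 + n)%N%:Z) <= -1).
have hf' := hf ltac:(lia).
have f0 := ord2_neq0 hf'.
have Y0' : Y != 0 by apply: contraTneq f0 => Y0'; rewrite -IH1 Y0' expr0n.
split.
  rewrite /Yc expr_div_n.
  apply: (mulIf (_ : 4%:R * fc A B C X != 0)); first by rewrite mulf_neq0.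
  rewrite dbl_id // -IH1; field; by rewrite Y0'.
apply: ord2_cast (Dc_ord hA hB hC IH2 _) _; first lia.
rewrite addnS; lia.
Qed.

Definition good (k r s : nat) :=
  [/\ (2 <= r)%N, (2 <= s)%N, coprime r s & is_minimal_cc (k%:R * cmin r s)].

Lemma infinitely (k : nat) (A B C : rat) (mu nu lam al kap : int) (m0 : nat) X0 Y0 (j0 : nat) :
  (k = 2 \/ k = 3)%N -> int2 A 0 -> int2 B 0 -> int2 C 0 ->
  (forall X W : rat, Pk k mu nu lam al kap X W = (W ^+ 2 - fc A B C X) * Gk k al kap X) ->
  (forall X : rat, (X + nu%:~R) * (X + al%:~R) < 0 -> (lam%:~R * (X + al%:~R)) ^+ 2 - fc A B C X < 0) ->
  0 < mu -> 0 < lam -> 0 < kap -> ord2 mu%:~R m0%:Z ->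
  (1 <= j0)%N -> Y0 ^+ 2 = fc A B C X0 -> ord2 X0 (- (2 * j0%:Z)) ->
  forall l : seq (nat * nat), exists r s : nat,
     [/\ (r, s) \notin l, (2 <= r)%N, (2 <= s)%N, coprime r s & is_minimal_cc (k%:R * cmin r s)].
Proof.
move=> hk hA hB hC Hid HS hmu hlam hkap Hmu hj0 hY0 hX0 l.
have Hinv := pts_inv hA hB hC hj0 hY0 hX0.
have build : forall N, exists sq : seq (nat * nat), [/\ size sq = N, uniq sq &
    forall x, x \in sq -> good k x.1 x.2 /\
      exists n, (n < N)%N /\ ord2 (x.1%:R / x.2%:R) (m0 + (j0 + (11 + n)))%N%:Z].
  elim => [|N [sq [hsz hu hall]]]; first by exists [::].
  have [h1 h2] := Hinv (11 + N)%N.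
  have hjN : (11 <= j0 + (11 + N))%N by lia.
  have [r [s [hr hs crs hmin ho]]] := point_good hk hA hB hC Hid HS hmu hlam hkap Hmu hjN h1 h2.
  have hnot : (r, s) \notin sq.
    apply/negP => /hall [_ [n [hn hon]]].
    have := ord2_uniq hon ho; move=> /eqP; rewrite eqz_nat => /eqP; lia.
  exists ((r, s) :: sq); split => /=.
  - by rewrite hsz.
  - by rewrite hnot hu.
  - move=> x; rewrite inE => /orP [/eqP -> | hx].
      by split => //; exists N; split.
    have [hg [n [hn hon]]] := hall x hx.
    by split => //; exists n; split => //; apply: ltnW.
have [sq [hsz hu hall]] := build (size l).+1.
have : has (fun x => x \notin l) sq.
  case: (boolP (has _ _)) => // hn; exfalso.
  have hsub : {subset sq <= l}.
    move=> x hx; move/hasPn: hn => /(_ x hx); by rewrite negbK.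
  have := uniq_leq_size hu hsub; by rewrite hsz ltnn.
move/hasP => [[r s] hx hnl].
have [[hr hs crs hmin] _] := hall _ hx.
by exists r, s; split.
Qed.
Definition A2 : rat := 313%:R. Definition B2 : rat := 120%:R * 120%:R. Definition C2 : rat := 1440%:R * 1440%:R.
Definition A3 : rat := 1180%:R. Definition B3 : rat := 512%:R * 81%:R * 11%:R.
Definition C3 : rat := 256%:R * 81%:R * 81%:R * 43%:R.
Lemma Hid2 : forall X W : rat, Pk 2 24 144 13 288 288 X W = (W ^+ 2 - fc A2 B2 C2 X) * Gk 2 288 288 X.
Proof. move=> X W; rewrite /Pk /Gk /fc /A2 /B2 /C2; ring. Qed.
Lemma Hid3 : forall X W : rat, Pk 3 36 504 26 648 432 X W = (W ^+ 2 - fc A3 B3 C3 X) * Gk 3 648 432 X.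
Proof. move=> X W; rewrite /Pk /Gk /fc /A3 /B3 /C3; ring. Qed.
Lemma HS2 (X : rat) : (X + (144:int)%:~R) * (X + (288:int)%:~R) < 0 ->
  ((13:int)%:~R * (X + (288:int)%:~R)) ^+ 2 - fc A2 B2 C2 X < 0.
Proof.
move=> h.
have -> : ((13:int)%:~R * (X + (288:int)%:~R)) ^+ 2 - fc A2 B2 C2 X =
  - ((X + (144:int)%:~R) * (X + (288:int)%:~R)) * (X - 288%:R).
  by rewrite /fc /A2 /B2 /C2; ring.
have hx : X - 288%:R < 0.
  rewrite ltNge; apply/negP => hx.
  have : 0 <= (X + (144:int)%:~R) * (X + (288:int)%:~R) by apply: mulr_ge0; rewrite /=; lra.
  lra.
nra.
Qed.
Lemma HS3 (X : rat) : (X + (504:int)%:~R) * (X + (648:int)%:~R) < 0 ->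
  ((26:int)%:~R * (X + (648:int)%:~R)) ^+ 2 - fc A3 B3 C3 X < 0.
Proof.
move=> h.
have -> : ((26:int)%:~R * (X + (648:int)%:~R)) ^+ 2 - fc A3 B3 C3 X =
  - ((X + (504:int)%:~R) * (X + (648:int)%:~R)) * (X - 648%:R).
  by rewrite /fc /A3 /B3 /C3; ring.
have hx : X - 648%:R < 0.
  rewrite ltNge; apply/negP => hx.
  have : 0 <= (X + (504:int)%:~R) * (X + (648:int)%:~R) by apply: mulr_ge0; rewrite /=; lra.
  lra.
nra.
Qed.

Lemma ord2_odd (n : nat) : odd n -> ord2 n%:R 0.
Proof. by move=> h; exists n, 1; split => //; rewrite expr0z mul1r divr1. Qed.
Lemma ord2_pow2 (n : nat) : ord2 (2%:R ^+ n) n%:Z.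
Proof. by exists 1, 1; split => //; rewrite divr1 mulr1 p2_nat rmorphXn. Qed.

Definition X02 : rat := - (9%:R * 17%:R * 23%:R * 97%:R) / (2%:R ^+ 4 * 121%:R).
Definition Y02 : rat := (9%:R * 5%:R * 13%:R * 31%:R * 9137%:R) / (2%:R ^+ 6 * 1331%:R).
Definition X03 : rat := - (9%:R * 7%:R * 17%:R) / (2%:R ^+ 2).
Definition Y03 : rat := (9%:R * 13%:R * 269%:R) / (2%:R ^+ 3).

Lemma Y02E : Y02 ^+ 2 = fc A2 B2 C2 X02.
Proof. rewrite /Y02 /X02 /fc /A2 /B2 /C2; field; rewrite ?mulf_neq0 ?expf_neq0 ?pnatr_eq0 //. Qed.
Lemma Y03E : Y03 ^+ 2 = fc A3 B3 C3 X03.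
Proof. rewrite /Y03 /X03 /fc /A3 /B3 /C3; field; rewrite ?mulf_neq0 ?expf_neq0 ?pnatr_eq0 //. Qed.

Lemma X02o : ord2 X02 (- (2 * (2%N)%:Z)).
Proof.
rewrite /X02 mulNr; apply: ord2_N; apply: ord2_cast.
  apply: ord2_mul; last apply: ord2_inv; last apply: ord2_mul.
  - apply: ord2_mul; [apply: ord2_mul; [apply: ord2_mul|]|]; exact: ord2_odd.
  - exact: ord2_pow2.
  - exact: ord2_odd.
by [].
Qed.
Lemma X03o : ord2 X03 (- (2 * (1%N)%:Z)).
Proof.
rewrite /X03 mulNr; apply: ord2_N; apply: ord2_cast.
  apply: ord2_mul; last apply: ord2_inv.
  - apply: ord2_mul; [apply: ord2_mul|]; exact: ord2_odd.
  - exact: ord2_pow2.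
by [].
Qed.

Lemma int2_A2 : int2 A2 0. Proof. exact: int2_n. Qed.
Lemma int2_B2 : int2 B2 0. Proof. by apply: int2_m; exact: int2_n. Qed.
Lemma int2_C2 : int2 C2 0. Proof. by apply: int2_m; exact: int2_n. Qed.
Lemma int2_A3 : int2 A3 0. Proof. exact: int2_n. Qed.
Lemma int2_B3 : int2 B3 0. Proof. by apply: int2_m; [apply: int2_m|]; exact: int2_n. Qed.
Lemma int2_C3 : int2 C3 0. Proof. by apply: int2_m; [apply: int2_m; [apply: int2_m|]|]; exact: int2_n. Qed.

Lemma mu2o : ord2 (24 : int)%:~R (3%N)%:Z.
Proof. by apply: (@ord2_z 24 3 3). Qed.
Lemma mu3o : ord2 (36 : int)%:~R (2%N)%:Z.
Proof. by apply: (@ord2_z 36 2 9). Qed.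

Theorem proposition8p3 :
  (forall l : seq (nat * nat), exists r s : nat,
     [/\ (r, s) \notin l, (2 <= r)%N, (2 <= s)%N, coprime r s &
         is_minimal_cc (2%:R * cmin r s)]) /\
  (forall l : seq (nat * nat), exists r s : nat,
     [/\ (r, s) \notin l, (2 <= r)%N, (2 <= s)%N, coprime r s &
         is_minimal_cc (3%:R * cmin r s)]).
Proof.
split.
- exact: (@infinitely 2 A2 B2 C2 24 144 13 288 288 3 X02 Y02 2 (or_introl erefl)
    int2_A2 int2_B2 int2_C2 Hid2 HS2 erefl erefl erefl mu2o erefl Y02E X02o).
- exact: (@infinitely 3 A3 B3 C3 36 504 26 648 432 2 X03 Y03 1 (or_intror erefl)
    int2_A3 int2_B3 int2_C3 Hid3 HS3 erefl erefl erefl mu3o erefl Y03E X03o).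
Qed.
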